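(* For all integers $m<0$ and $n\geq 1$, \[ N(\leq m+1,n)-M(\leq m,n)=q(-m-1,n)-p(m+2,n). \]
   Context: For a partition $\lambda$, $\operatorname{rank}(\lambda)$ is its largest part minus its number of parts. $\operatorname{crank}(\lambda)$ is the largest part of $\lambda$ if $\lambda$ contains no part equal to $1$; otherwise it is the number of parts larger than the number of ones minus the number of ones. For $n\geq1$, $N(m,n)$ is the number of partitions of $n$ with rank $m$. For $n>1$, $M(m,n)$ is the number of partitions of $n$ with crank $m$. For $n=1$ one sets $M(0,1)=-1$, $M(\pm1,1)=1$ and $M(m,1)=0$ otherwise. The cumulative functions are $N(\leq m,n)=\sum_{r\leq m}N(r,n)$ and $M(\leq m,n)=\sum_{r\leq m}M(r,n)$. Define $p(m,n)=\sum_{r\geq m}N(r,n)$, the number of partitions of $n$ with rank at least $m$. For a partition $\lambda=(\lambda_1\geq\cdots\geq\lambda_\ell)$, its rank-set is the infinite sequence $[-\lambda_1,1-\lambda_2,\ldots,j-\lambda_{j+1},\ldots,\ell-1-\lambda_\ell,\ell,\ell+1,\ldots]$. Then $q(m,n)$ is the number of partitions of $n$ whose rank-set contains $m$. *)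

(* Defs.v *)
From mathcomp Require Import all_boot all_order all_algebra.
Set Implicit Arguments. Unset Strict Implicit. Unset Printing Implicit Defensive.
Import Order.TTheory GRing.Theory Num.Theory.
Local Open Scope ring_scope.

Definition is_partition (n : nat) (s : seq nat) : bool :=
  [&& sorted geq s, all (fun x => 0 < x)%N s & sumn s == n].

(* Number of partitions of n satisfying P.  Every partition of n has at most
   n parts, each at most n, so it is counted exactly once, as the tuple of
   length (size s) with entries in 'I_n.+1. *)
Definition pcount (n : nat) (P : seq nat -> bool) : nat :=
  (\sum_(k < n.+1)
     #|[pred t : k.-tuple 'I_n.+1 |
        is_partition n [seq val i | i <- t] && P [seq val i | i <- t]]|)%N.

Definition largest (s : seq nat) : nat := head 0%N s.

Definition rank (s : seq nat) : int := (largest s)%:Z - (size s)%:Z.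

Definition omega (s : seq nat) : nat := count (fun x => x == 1%N) s.

Definition crank (s : seq nat) : int :=
  if omega s == 0%N then (largest s)%:Z
  else (count (fun x => omega s < x)%N s)%:Z - (omega s)%:Z.

Definition Nrank (m : int) (n : nat) : int :=
  (pcount n (fun s => rank s == m))%:Z.

Definition Mcrank (m : int) (n : nat) : int :=
  if n == 1%N then
    (if m == 0 then -1 else if (m == 1) || (m == -1) then 1 else 0)
  else (pcount n (fun s => crank s == m))%:Z.

(* Cumulative function sum_{r <= m} f r n.  For n >= 1 both N(r,n) and
   M(r,n) vanish for r < -n, so the sum is over -n <= r <= m. *)
Definition cumul (f : int -> nat -> int) (m : int) (n : nat) : int :=
  if m + n%:Z < 0 then 0
  else \sum_(i < (absz (m + n%:Z)).+1) f (m - i%:Z) n.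

Definition Nle (m : int) (n : nat) : int := cumul Nrank m n.
Definition Mle (m : int) (n : nat) : int := cumul Mcrank m n.

Definition prank (m : int) (n : nat) : int :=
  (pcount n (fun s => m <= rank s))%:Z.

Definition in_rank_set (m : int) (s : seq nat) : bool :=
  has (fun j => (j%:Z - (nth 0%N s j)%:Z == m)) (iota 0 (size s))
  || ((size s)%:Z <= m).

Definition qrs (m : int) (n : nat) : int :=
  (pcount n (in_rank_set m))%:Z.

(* Main.v *)
Require Import Defs.
From mathcomp Require Import all_boot all_order all_algebra zify.
Set Implicit Arguments. Unset Strict Implicit. Unset Printing Implicit Defensive.

Definition Lk (n k : nat) : seq (seq nat) :=
  [seq [seq val i | i <- tval t] | t <- enum {: k.-tuple 'I_n.+1}].

Definition plist (n : nat) : seq (seq nat) :=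
  filter (is_partition n) (flatten [seq Lk n k | k <- iota 0 n.+1]).

Lemma Lk_size n k s : s \in Lk n k -> size s = k.
Proof. by case/mapP=> t _ ->; rewrite size_map size_tuple. Qed.

Lemma Lk_uniq n k : uniq (Lk n k).
Proof.
rewrite map_inj_uniq ?enum_uniq // => t1 t2 /(inj_map val_inj) H.
exact: val_inj.
Qed.

Lemma flat_uniq n ks : uniq ks -> uniq (flatten [seq Lk n k | k <- ks]).
Proof.
elim: ks => //= k ks IH /andP[kn uks]; rewrite cat_uniq Lk_uniq IH // andbT.
apply/hasPn => s /flattenP [s' /mapP [k' k'in ->]] sin.
apply/negP => /Lk_size sk; move/Lk_size: sin; rewrite sk => E.
by move: kn; rewrite E k'in.
Qed.

Lemma part_size n s : is_partition n s -> size s <= n.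
Proof.
case/and3P=> _ pos /eqP <-; elim: s pos => //= x s IH /andP[x0 ps].
by have := IH ps; lia.
Qed.

Lemma part_le n s x : is_partition n s -> x \in s -> x <= n.
Proof.
case/and3P=> _ _ /eqP <-; elim: s => //= y s IH; rewrite in_cons.
by case/orP=> [/eqP ->|/IH]; lia.
Qed.

Lemma plist_mem n s : (s \in plist n) = is_partition n s.
Proof.
rewrite mem_filter; case P: (is_partition n s) => //.
apply/flatten_mapP; exists (size s).
  by rewrite mem_iota /= add0n ltnS (part_size P).
have H : size (map (@inord n) s) = size s by rewrite size_map.
apply/mapP; exists (tcast H (in_tuple (map (@inord n) s))); first by rewrite mem_enum.
rewrite val_tcast /= -map_comp map_id_in // => x xin /=.
by rewrite inordK // ltnS (part_le P xin).
Qed.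

Lemma plist_uniq n : uniq (plist n).
Proof. by rewrite filter_uniq // flat_uniq // iota_uniq. Qed.

Lemma pcountE n P : pcount n P = count P (plist n).
Proof.
rewrite /pcount /plist count_filter count_flatten -map_comp sumnE big_map.
rewrite -(big_mkord xpredT (fun k => #|[pred t : k.-tuple 'I_n.+1 | is_partition n [seq val i | i <- t] && P [seq val i | i <- t]]|)).
rewrite /index_iota subn0; apply: eq_bigr => k _.
rewrite /Lk /= count_map cardE /enum_mem size_filter count_filter; apply: eq_count => t /=.
by rewrite !inE andbT andbC.
Qed.

Lemma sorted_nthP (s : seq nat) :
  sorted geq s <-> (forall i, nth 0 s i.+1 <= nth 0 s i).
Proof.
elim: s => [|x s IH] /=; first by split => // _ [].
case: s IH => [|y s] IH /=; first by split => // _ [|[]].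
split.
  case/andP=> yx /IH H [|i] //=; apply: H.
move=> H; rewrite (H 0) /=; apply/IH => i; apply: (H i.+1).
Qed.

Lemma nth_mono (s : seq nat) i j :
  sorted geq s -> i <= j -> nth 0 s j <= nth 0 s i.
Proof.
move/sorted_nthP=> H /subnKC <-; elim: (j - i) => [|d IH]; first by rewrite addn0.
by rewrite addnS; apply: leq_trans (H _) IH.
Qed.

Lemma geqT_trans : transitive geq.
Proof. by move=> a b c /= H1 H2; apply: leq_trans H2 H1. Qed.

Lemma countK (s : seq nat) i j :
  sorted geq s -> (i < count (fun x => j < x) s) = (j < nth 0 s i).
Proof.
elim: s i => [|x s IH] i /=; first by rewrite nth_nil.
move=> ps; have ss : sorted geq s by case: s ps {IH} => //= y s /andP[].
have allx := order_path_min geqT_trans ps.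
case: (ltnP j x) => jx /=.
  by case: i => [|i] //=; rewrite add1n ltnS IH.
have c0 : count (fun x0 => j < x0) s = 0.
  apply/eqP; rewrite -leqn0 leqNgt -has_count; apply/hasPn => y ys.
  by move/allP: allx => /(_ y ys) /= yx; rewrite -leqNgt (leq_trans yx).
rewrite c0 /=; apply/esym/negbTE; rewrite -leqNgt.
case: i => [|i] //=; apply: leq_trans jx.
case: (ltnP i (size s)) => [il|il]; last by rewrite nth_default.
by move/allP: allx => /(_ _ (mem_nth 0 il)).
Qed.

Lemma find_char (T : Type) (p : pred T) (x0 : T) s t :
  t < size s -> p (nth x0 s t) -> (forall j, j < t -> ~~ p (nth x0 s j)) ->
  find p s = t.
Proof.
elim: s t => [|y s IH] [|t] //= ts pt H.
  by rewrite pt.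
have := H 0 (ltn0Sn _); rewrite /= => /negbTE ->; congr S.
by apply: IH => // j jt; apply: (H j.+1).
Qed.

Lemma sum_minn H x : \sum_(i < H) (i < x : nat) = minn H x.
Proof. by elim: H => [|H IH]; rewrite ?big_ord0 ?big_ord_recr /= ?IH; lia. Qed.

Lemma count_minn H x : count (fun j => j < x) (iota 0 H) = minn H x.
Proof.
elim: H => [|H0 IH]; first by rewrite /=; lia.
rewrite -[H0.+1]addn1 iotaD count_cat IH /=; lia.
Qed.

Lemma sumn_mkseq (f : nat -> nat) H : sumn (mkseq f H) = \sum_(i < H) f i.
Proof. by rewrite sumnE big_map -(big_mkord xpredT) /index_iota subn0. Qed.

Lemma sorted_app_ones (a : seq nat) r :
  sorted geq a -> all (fun x => 0 < x) a -> sorted geq (a ++ nseq r 1).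
Proof.
move=> sa pa; apply/sorted_nthP => i; rewrite !nth_cat !nth_nseq.
move/sorted_nthP: sa => sa.
case: (ltnP i.+1 (size a)) => h1.
  by rewrite (ltnW h1) sa.
case: (ltnP i (size a)) => h2.
  have -> : i.+1 - size a = 0 by lia.
  case: (0 < r) => //; move/allP: pa => /(_ _ (mem_nth 0 h2)) //.
have -> : i.+1 - size a = (i - size a).+1 by lia.
by case: ifP => // H; rewrite ifT //; apply: ltn_trans H.
Qed.

Lemma sorted_insert (k : seq nat) t x :
  sorted geq k -> t <= size k -> (0 < t -> x <= nth 0 k t.-1) -> nth 0 k t <= x ->
  sorted geq (take t k ++ x :: drop t k).
Proof.
move=> sk tk H1 H2; have st : size (take t k) = t by rewrite size_takel.
move/sorted_nthP: (sk) => sk'.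
apply/sorted_nthP => i; rewrite !nth_cat st.
case: (ltnP i.+1 t) => h1.
  by rewrite (ltnW h1) !nth_take ?sk' // ltnW.
case: (ltnP i t) => h2.
  have e : i = t.-1 by lia.
  have -> : i.+1 - t = 0 by lia.
  by rewrite /= nth_take // e H1 //; lia.
have -> : i.+1 - t = (i - t).+1 by lia.
case E: (i - t) => [|d] /=.
  by rewrite nth_drop addn0.
rewrite !nth_drop; have -> : t + d.+1 = (t + d).+1 by lia.
exact: sk'.
Qed.

Definition pconj (s : seq nat) : seq nat :=
  mkseq (fun j => count (fun x => j < x) s) (head 0 s).

Lemma conj_sorted s : sorted geq (pconj s).
Proof.
apply: (homo_sorted (e := leq)); last exact: iota_sorted.
move=> a b ab /=; apply: sub_count => x /=; exact: leq_ltn_trans.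
Qed.

Lemma head_max (s : seq nat) x : sorted geq s -> x \in s -> x <= head 0 s.
Proof.
move=> ss /(nthP 0) [i _ <-]; have := nth_mono ss (leq0n i).
by case: s ss => [|y s].
Qed.

Lemma conj_pos s : all (fun x => 0 < x) (pconj s).
Proof.
apply/allP => y /mapP [j]; rewrite mem_iota add0n => /andP[_ jh] ->.
rewrite -has_count; apply/hasP; exists (head 0 s) => //.
by case: s jh => [|z s] //= _; rewrite mem_head.
Qed.

Lemma sum_count_gen (s : seq nat) H :
  all (fun x => x <= H) s -> \sum_(j < H) count (fun x => j < x) s = sumn s.
Proof.
elim: s => [|x s IH] /=; first by rewrite big1.
case/andP=> xH aH; rewrite big_split /= IH // sum_minn; lia.
Qed.

Lemma conj_sum s : sorted geq s -> sumn (pconj s) = sumn s.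
Proof.
move=> ss; rewrite /pconj sumn_mkseq sum_count_gen //.
by apply/allP => x xs; apply: head_max.
Qed.

Lemma conj_conj s : sorted geq s -> all (fun x => 0 < x) s -> pconj (pconj s) = s.
Proof.
move=> ss ps.
have sz : size (pconj (pconj s)) = size s.
  rewrite /pconj size_mkseq; case: s ss ps => [|x s] //= ss /andP[x0 ps].
  case: x x0 ss => // x _ _ /=; rewrite add1n; congr S; apply/eqP; rewrite -all_count.
  by apply: sub_all ps => y /=; lia.
apply: (eq_from_nth (x0 := 0) sz) => i; rewrite sz => isz.
have hi : i < head 0 (pconj s).
  by move: sz; rewrite {1}/pconj size_mkseq => ->.
rewrite {1}/pconj nth_mkseq // /pconj count_map /=.
  rewrite (eq_count (a2 := fun j => j < nth 0 s i)); last first.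
    move=> j /=; rewrite -(countK _ _ ss) //.
  rewrite count_minn; apply/minn_idPr.
  by have := nth_mono ss (leq0n i); case: (s) => [|y t].
Qed.

Definition rs_nat (k : nat) (s : seq nat) : bool :=
  has (fun j => j == nth 0 s j + k) (iota 0 (size s)) || (size s <= k).

Definition Bpred (h : nat) (u : seq nat) : bool :=
  has (fun j => nth 0 u j == j + h) (iota 0 (size u)).

Lemma rs_char k s : sorted geq s -> all (fun x => 0 < x) s ->
  ~~ rs_nat k s <-> exists j, j < nth 0 s (j + k) /\ nth 0 s (j + k).+1 <= j.
Proof.
move=> ss ps; have posn : forall i, 0 < nth 0 s i -> i < size s.
  by move=> i; case: (ltnP i (size s)) => // H; rewrite nth_default.
have posi : forall i, i < size s -> 0 < nth 0 s i.
  by move=> i H; move/allP: ps => /(_ _ (mem_nth 0 H)).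
split.
  rewrite negb_or => /andP[/hasPn H1]; rewrite -ltnNge => ks.
  have P : forall J, (exists j, j < nth 0 s (j + k) /\ nth 0 s (j + k).+1 <= j)
                     \/ J < nth 0 s (J + k).
    elim=> [|J [IH|IH]]; [by right; rewrite add0n posi | by left | ].
    case: (leqP (nth 0 s (J + k).+1) J) => h1; first by left; exists J.
    right; case: (ltnP J.+1 (nth 0 s (J.+1 + k))) => // h2.
    have e : nth 0 s (J + k).+1 = J.+1 by rewrite addSn in h2 *; lia.
    have il : (J + k).+1 < size s by apply: posn; rewrite e.
    have := H1 (J + k).+1; rewrite mem_iota add0n il e => /(_ isT).
    by rewrite addSn eqxx.
  case: (P (head 0 s)) => // h.
  have := nth_mono ss (leq0n (head 0 s + k)).
  by case: (s) h => [|x t] /=; lia.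
case=> j [h1 h2]; rewrite negb_or -ltnNge; apply/andP; split; last first.
  by have := posn _ (leq_ltn_trans (leq0n j) h1); lia.
apply/hasPn => i; rewrite mem_iota add0n => /andP[_ isz].
case: (leqP i (j + k)) => hi.
  by have := nth_mono ss hi; lia.
by have := nth_mono ss hi; lia.
Qed.

Lemma bpred_conj k s : sorted geq s -> all (fun x => 0 < x) s ->
  Bpred k.+1 (pconj s) <-> exists j, j < nth 0 s (j + k) /\ nth 0 s (j + k).+1 <= j.
Proof.
move=> ss ps; split.
  case/hasP => j; rewrite mem_iota add0n /pconj size_mkseq => /andP[_ jh].
  rewrite nth_mkseq // => /eqP e; exists j.
  split; first by rewrite -countK // e; lia.
  by rewrite leqNgt -countK // e; lia.
case=> j [h1 h2]; apply/hasP; exists j.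
  rewrite mem_iota add0n /pconj size_mkseq /=.
  have := nth_mono ss (leq0n (j + k)); case: (s) h1 => [|x t] /=; lia.
have jh : j < head 0 s.
  have := nth_mono ss (leq0n (j + k)); case: (s) h1 => [|x t] /=; lia.
rewrite /pconj nth_mkseq //; apply/eqP.
have c1 : j + k < count (fun x => j < x) s by rewrite countK.
have c2 : ~~ ((j + k).+1 < count (fun x => j < x) s) by rewrite countK // -leqNgt.
lia.
Qed.

Definition nonones (s : seq nat) := filter (fun x => x != 1) s.

Lemma split_ones s : sorted geq s -> all (fun x => 0 < x) s ->
  s = nonones s ++ nseq (omega s) 1.
Proof.
elim: s => [|x s IH] //= ps /andP[x0 pos].
have ss := path_sorted ps.
have allx := order_path_min geqT_trans ps.
have E := IH ss pos.
case: (eqVneq x 1) => [x1|x1].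
  subst x.
  have e : nonones s = [::].
    apply/eqP; rewrite -size_eq0 size_filter -leqn0 leqNgt -has_count.
    apply/hasPn => y ys /=; move/allP: allx => /(_ y ys) /= y1.
    move/allP: pos => /(_ y ys) /= y0; rewrite negbK; apply/eqP; lia.
  rewrite /nonones /omega /= -/(nonones s) -/(omega s) e /=.
  by rewrite {1}E e.
rewrite /nonones /omega /= add0n.
by rewrite {1}E.
Qed.

Fixpoint Daux (h j : nat) (k : seq nat) : nat :=
  match k with
  | [::] => 0
  | x :: k' => if j.+1 + h <= x then (Daux h j.+1 k').+1 else 0
  end.

Lemma Daux_spec h k j : Daux h j k <= size k /\
  (forall i, i < Daux h j k -> j + i + 1 + h <= nth 0 k i) /\
  nth 0 k (Daux h j k) < j + Daux h j k + 1 + h.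
Proof.
elim: k j => [|x k IH] j /=.
  by split => //; split => [i|]; [rewrite ltn0 | lia].
case: ifP => H /=.
  2: by split => //; split => [i|]; [rewrite ltn0 | move/negbT: H; lia].
have [A [B C]] := IH j.+1; split; first by [].
split; last by move: C; lia.
case=> [|i] /=; first by lia.
by rewrite ltnS => /B; lia.
Qed.

Lemma Daux_char h k j t :
  (forall i, i < t -> j + i + 1 + h <= nth 0 k i) ->
  nth 0 k t < j + t + 1 + h -> Daux h j k = t.
Proof.
elim: k j t => [|x k IH] j t /= H1 H2.
  by case: t H1 H2 => // t /(_ 0 isT); rewrite nth_nil; lia.
case: t H1 H2 => [|t] H1 H2 /=.
  by rewrite ifF //; apply/negbTE; rewrite -ltnNge; move: H2; rewrite /=; lia.
rewrite ifT; last by have := H1 0 isT; rewrite /=; lia.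
congr S; apply: IH.
  by move=> i it; have := H1 i.+1 it; rewrite /=; lia.
by move: H2; rewrite /=; lia.
Qed.

Definition Dst h k := Daux h 0 k.

Definition fmap (h : nat) (s : seq nat) : seq nat :=
  let k := nonones s in let t := Dst h k in
  take t k ++ (t + h) :: drop t k ++ nseq (omega s - (t + h)) 1.

Definition Bidx (h : nat) (u : seq nat) : nat :=
  find (fun j => nth 0 u j == j + h) (iota 0 (size u)).

Definition gmap (h : nat) (u : seq nat) : seq nat :=
  let i := Bidx h u in take i u ++ drop i.+1 u ++ nseq (i + h) 1.

Definition crank_le (h : nat) (s : seq nat) : bool :=
  (0 < omega s) && (count (fun x => omega s < x) s + h <= omega s).

Definition ispart n s := is_partition n s.

Lemma all_sub (p : pred nat) s s' : {subset s' <= s} -> all p s -> all p s'.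
Proof. by move=> H /allP A; apply/allP => x /H /A. Qed.

Lemma all_take (p : pred nat) t s : all p s -> all p (take t s).
Proof. by apply: all_sub => x; apply: mem_take. Qed.
Lemma all_drop (p : pred nat) t s : all p s -> all p (drop t s).
Proof. by apply: all_sub => x; apply: mem_drop. Qed.

Lemma fmap_ok n h s : 0 < h -> is_partition n s -> crank_le h s ->
  [/\ is_partition n (fmap h s), Bpred h (fmap h s) & gmap h (fmap h s) = s].
Proof.
move=> h0 /and3P[ss ps /eqP sn] /andP[w0 Hc].
set k := nonones s; set w := omega s.
have sk : sorted geq k := sorted_filter geqT_trans _ ss.
have pk : all (fun x => 1 < x) k.
  apply/allP => x; rewrite mem_filter => /andP[x1 xs].
  by move/allP: ps => /(_ x xs) /=; move: x1; lia.
have E : s = k ++ nseq w 1 := split_ones ss ps.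
have [A [B C]] := Daux_spec h k 0.
rewrite -/(Dst h k) in A B C; set t := Dst h k in A B C.
have tw : t + h <= w.
  rewrite leqNgt; apply/negP => wt.
  have hw : h <= w by lia.
  have := B (w - h); rewrite add0n => /(_ ltac:(lia)) => Bw.
  have cw : w - h < count (fun x => w < x) k by rewrite countK //; lia.
  move: Hc; rewrite -/w {1}E count_cat count_nseq /=.
  have -> : w < 1 = false by lia.
  lia.
have st : size (take t k) = t by rewrite size_takel.
have eq1 : fmap h s = (take t k ++ (t + h) :: drop t k) ++ nseq (w - (t + h)) 1.
  by rewrite -catA.
have pk0 : all (fun x => 0 < x) k by apply: sub_all pk => x /=; lia.
rewrite eq1; split.
- apply/and3P; split.
  + apply: sorted_app_ones.
      apply: sorted_insert => //.
        by move=> t0; have := B t.-1; lia.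
      by move: C; lia.
    rewrite all_cat /= all_take // all_drop // andbT; lia.
  + rewrite !all_cat /= all_take // all_drop // all_nseq orbT !andbT; lia.
  + apply/eqP; rewrite !sumn_cat /= sumn_nseq -sn E sumn_cat sumn_nseq.
    rewrite -{3}(cat_take_drop t k) sumn_cat !mul1n; set x := sumn (take t k); set y := sumn (drop t k); lia.
- apply/hasP; exists t.
    by rewrite mem_iota add0n !size_cat st /=; lia.
  by rewrite nth_cat size_cat st /= ifT ?nth_cat ?st ?ltnn ?subnn //; lia.
- have bi : Bidx h ((take t k ++ (t + h) :: drop t k) ++ nseq (w - (t + h)) 1) = t.
    apply: (find_char (x0 := 0)).
    + by rewrite size_iota !size_cat st /=; lia.
    + rewrite nth_iota; last by rewrite !size_cat st /=; lia.
      by rewrite add0n nth_cat size_cat st /= ifT ?nth_cat ?st ?ltnn ?subnn //; lia.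
    + move=> j jt; rewrite nth_iota; last by rewrite !size_cat st /=; lia.
      rewrite add0n nth_cat size_cat st /= (ltn_addr _ jt) nth_cat st jt nth_take //.
      by have := B j jt; lia.
  rewrite /gmap bi -catA take_size_cat // -[t.+1]add1n -drop_drop drop_size_cat //=.
  by rewrite /= drop0 -catA catA cat_take_drop -nseqD subnK // {3}E.
Qed.

Lemma gmap_ok n h u : 0 < h -> is_partition n u -> Bpred h u ->
  [/\ is_partition n (gmap h u), crank_le h (gmap h u) & fmap h (gmap h u) = u].
Proof.
move=> h0 /and3P[su pu /eqP un] Hb.
have := Hb; rewrite /Bpred has_find => il.
have := nth_find 0 Hb; rewrite -/(Bidx h u).
rewrite size_iota in il; rewrite -/(Bidx h u) in il.
set i := Bidx h u in il *; rewrite nth_iota // add0n => /eqP ui.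
set a := take i u; set d := drop i.+1 u.
have Eu : u = a ++ nth 0 u i :: d by rewrite /a /d -drop_nth // cat_take_drop.
have sa : size a = i by rewrite size_takel // ltnW.
have aa : all (fun y => i + h <= y) a.
  apply/allP => y /(nthP 0) [j]; rewrite sa => ji <-.
  by rewrite /a nth_take // -ui; apply: nth_mono => //; apply: ltnW.
have ad : all (fun y => y <= i + h) d.
  apply/allP => y /(nthP 0) [j] _ <-.
  by rewrite /d nth_drop -ui; apply: nth_mono => //; lia.
have sad : sorted geq (a ++ d).
  apply: (subseq_sorted geqT_trans _ su); rewrite {1}Eu.
  by apply: cat_subseq; [apply: subseq_refl | apply: subseq_cons].
have pad : all (fun x => 0 < x) (a ++ d).
  by rewrite all_cat /a /d all_take // all_drop.
have eg : gmap h u = (a ++ d) ++ nseq (i + h) 1 by rewrite -catA.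
have sd : sorted geq d by apply: (subseq_sorted geqT_trans (drop_subseq _ _) su).
have pd : all (fun x => 0 < x) d by rewrite all_drop.
have Ed := split_ones sd pd.
set nd := nonones d in Ed.
have a1 : all (fun x => x != 1) a.
  case: (i) aa sa => [|i'] aa' sa'; first by case: (a) sa'.
  by apply: sub_all aa' => y /=; lia.
have non : nonones ((a ++ d) ++ nseq (i + h) 1) = a ++ nd.
  rewrite /nonones !filter_cat filter_nseq /= cats0.
  by move/all_filterP: a1 => ->.
have oma : omega a = 0.
  by apply/eqP; rewrite -leqn0 leqNgt -has_count; apply/hasPn => y /(allP a1) /negbTE ->.
have om : omega ((a ++ d) ++ nseq (i + h) 1) = omega d + (i + h).
  by rewrite /omega !count_cat count_nseq /= -/(omega a) oma mul1n.
rewrite eg; split.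
- apply/and3P; split.
  + exact: sorted_app_ones.
  + by rewrite all_cat pad all_nseq orbT.
  + apply/eqP; rewrite !sumn_cat sumn_nseq -un Eu sumn_cat /= ui; lia.
- apply/andP; split; first by rewrite om; lia.
  rewrite om !count_cat count_nseq /=.
  have -> : omega d + (i + h) < 1 = false by lia.
  have c1 : count (fun x => omega d + (i + h) < x) a <= i by rewrite -sa count_size.
  have -> : count (fun x => omega d + (i + h) < x) d = 0.
    apply/eqP; rewrite -leqn0 leqNgt -has_count; apply/hasPn => y /(allP ad) /=; lia.
  lia.
- have dst : Dst h (a ++ nd) = i.
    apply: Daux_char => [j ji|].
      rewrite nth_cat sa ji /a nth_take //.
      by have := nth_mono su (ltnW ji); lia.
    rewrite nth_cat sa ltnn subnn.
    case E2: nd Ed => [|y nd'] Ed' /=; first by lia.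
    have : y \in d by rewrite Ed' mem_cat mem_head.
    by move/(allP ad); lia.
  rewrite /fmap non dst om take_size_cat // drop_size_cat //.
  by rewrite addnK -Ed -ui -Eu.
Qed.

Lemma count_le_bij n (P Q : pred (seq nat)) (f g : seq nat -> seq nat) :
  (forall s, is_partition n s -> P s ->
     [/\ is_partition n (f s), Q (f s) & g (f s) = s]) ->
  count P (plist n) <= count Q (plist n).
Proof.
move=> H; rewrite -!size_filter.
have <- : size (map f (filter P (plist n))) = size (filter P (plist n)) by rewrite size_map.
apply: uniq_leq_size.
  rewrite map_inj_in_uniq; first by apply: filter_uniq; apply: plist_uniq.
  move=> x y.
  rewrite !(mem_filter P) !plist_mem => /andP[Px px] /andP[Py py] e.
  by have [_ _ <-] := H _ px Px; have [_ _ <-] := H _ py Py; rewrite e.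
move=> y /mapP [x]; rewrite (mem_filter P) plist_mem => /andP[Px px] ->.
have [fp fq _] := H _ px Px; by rewrite (mem_filter Q) plist_mem fq fp.
Qed.

Lemma count_bij n (P Q : pred (seq nat)) (f g : seq nat -> seq nat) :
  (forall s, is_partition n s -> P s ->
     [/\ is_partition n (f s), Q (f s) & g (f s) = s]) ->
  (forall s, is_partition n s -> Q s ->
     [/\ is_partition n (g s), P (g s) & f (g s) = s]) ->
  count P (plist n) = count Q (plist n).
Proof.
by move=> H1 H2; apply/eqP; rewrite eqn_leq (count_le_bij H1) (count_le_bij H2).
Qed.

Lemma conj_part n s : is_partition n s -> is_partition n (pconj s).
Proof.
case/and3P=> ss ps sn; apply/and3P; split; rewrite ?conj_sorted ?conj_pos //.
by rewrite conj_sum.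
Qed.

Lemma core_nat n h : 0 < h ->
  count (crank_le h) (plist n) = count (fun s => ~~ rs_nat h.-1 s) (plist n).
Proof.
move=> h0.
rewrite (count_bij (fun s p c => fmap_ok h0 p c) (fun s p c => gmap_ok h0 p c)).
rewrite (@count_bij n (Bpred h) (fun s => Bpred h (pconj s)) pconj pconj).
- apply: eq_in_count => s; rewrite plist_mem => /and3P[ss ps _].
  case: h h0 => // k _ /=.
  apply/idP/idP => [/(bpred_conj k ss ps)/(rs_char k ss ps)|/(rs_char k ss ps)/(bpred_conj k ss ps)] //.
- move=> s sp Bs; have [ss ps _] := and3P sp.
  by split; rewrite ?conj_part // conj_conj.
- move=> s sp Bs; have [ss ps _] := and3P sp.
  by split; rewrite ?conj_part // conj_conj.
Qed.
Unset Implicit Arguments.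
Import Order.TTheory GRing.Theory Num.Theory.
Local Open Scope ring_scope.

Lemma crank_leE h s : (0 < h)%N -> (crank s <= - (h%:Z)) = crank_le h s.
Proof.
move=> h0; rewrite /crank /crank_le; case: eqP => [->|/eqP w0] /=.
  by apply/negbTE; rewrite -ltNge; lia.
have -> : (0 < omega s)%N by lia.
by apply/idP/idP; lia.
Qed.

Lemma rsE k s : in_rank_set (k%:Z) s = rs_nat k s.
Proof.
rewrite /in_rank_set /rs_nat lez_nat; congr orb; apply: eq_has => j /=.
by apply/eqP/eqP; lia.
Qed.

Lemma step_bool (x a b : int) : a - 1 <= b ->
  addn (a <= x <= b)%R (x == a - 1)%R = (a - 1 <= x <= b)%R :> nat.
Proof.
move=> ab; case: (eqVneq x (a - 1)) => [->|ne].
  have -> : (a <= a - 1) = false by apply/negbTE; rewrite -ltNge; lia.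
  by rewrite lexx ab.
have -> : (a - 1 <= x) = (a <= x).
  apply/idP/idP => H; last by lia.
  by move: ne H; case: (eqVneq x (a-1)) => //; lia.
by rewrite addn0.
Qed.

Lemma count_add_helper (T : Type) (a b c : pred T) l :
  (forall x, addn (a x) (b x) = c x) -> addn (count a l) (count b l) = count c l.
Proof.
move=> H; elim: l => //= x l IH; rewrite -IH -H; lia.
Qed.

Lemma cumul_count (f : int -> nat -> int) (g : seq nat -> int) l m n :
  (forall r, f r n = (count (fun s => g s == r) l)%:Z) ->
  (forall s, s \in l -> - (n%:Z) <= g s) ->
  cumul f m n = (count (fun s => g s <= m) l)%:Z.
Proof.
move=> Hf Hg; rewrite /cumul.
case: ifP => H.
  congr Posz; apply/esym/eqP; rewrite -leqn0 leqNgt -has_count.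
  apply/hasPn => s /Hg gs; rewrite -ltNge; lia.
have K : forall K : nat, \sum_(i < K.+1) f (m - i%:Z) n =
    (count (fun s => m - K%:Z <= g s <= m) l)%:Z.
  elim=> [|K IH].
    rewrite big_ord_recr big_ord0 /= add0r Hf subr0; congr Posz.
    by apply: eq_count => s /=; rewrite eq_le andbC.
  rewrite big_ord_recr /= IH Hf -PoszD; congr Posz.
  apply: count_add_helper => s; have -> : m - K.+1%:Z = m - K%:Z - 1 by rewrite -addn1 PoszD; lia.
  by rewrite step_bool //; lia.
have e : m - (absz (m + n%:Z))%:Z = - n%:Z.
  by move/negbT: H; rewrite -leNgt => H; rewrite gez0_abs //; lia.
rewrite K e; congr Posz; apply: eq_in_count => s /Hg gs /=.
by rewrite gs.
Qed.

Lemma rank_lb n s : is_partition n s -> - (n%:Z) <= rank s.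
Proof. move/part_size; rewrite /rank; lia. Qed.

Lemma crank_lb n s : is_partition n s -> - (n%:Z) <= crank s.
Proof.
move/part_size => H; rewrite /crank; case: eqP => _; first by lia.
have : (omega s <= size s)%N := count_size _ _.
lia.
Qed.

Lemma part1 s : is_partition 1 s = (s == [:: 1%N]).
Proof.
apply/idP/eqP => [|->] //; case/and3P=> _.
case: s => [|x [|y t]] //=.
  by rewrite andbT => x0 /eqP xe; congr cons; lia.
by case/and3P => x0 y0 _ /eqP; lia.
Qed.

Lemma plist1 (P : pred (seq nat)) : count P (plist 1) = P [:: 1%N].
Proof.
have pe : perm_eq (plist 1) [:: [:: 1%N]].
  apply: uniq_perm => //; first exact: plist_uniq.
  by move=> s; rewrite plist_mem part1 inE.
by rewrite (permP pe) /= addn0.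
Qed.

Theorem theorem2p1 (m : int) (n : nat) :
  m < 0 -> (1 <= n)%N ->
  Nle (m + 1) n - Mle m n = qrs (- m - 1) n - prank (m + 2) n.
Proof.
move=> m0 n1.
have eN : Nle (m + 1) n = (count (fun s => rank s <= m + 1) (plist n))%:Z.
  apply: cumul_count => [r|s]; first by rewrite /Nrank pcountE.
  by rewrite plist_mem; apply: rank_lb.
rewrite eN /qrs /prank !pcountE.
case: (eqVneq n 1%N) => [->|n2].
  rewrite !plist1 /Mle /cumul /Mcrank /= /in_rank_set /rank /largest /=.
  case: (eqVneq m (-1)) => [->|mn1]. by rewrite big_ord_recr big_ord0 /= subr0.
  have -> : (m + 1%:Z < 0) = true by lia.
  have -> : (1%Z <= - m - 1) = true by lia.
  have -> : (m + 2 <= 1%Z - 1%Z) = true by lia.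
  have -> : (1%Z - 1%Z <= m + 1) = false by apply/negbTE; rewrite -ltNge; lia.
  by rewrite orbT.
have eM : Mle m n = (count (fun s => crank s <= m) (plist n))%:Z.
  apply: cumul_count => [r|s]; first by rewrite /Mcrank (negbTE n2) pcountE.
  by rewrite plist_mem; apply: crank_lb.
rewrite eM.
set h := absz m.
have h0 : (0 < h)%N by rewrite /h; lia.
have em : m = - (h%:Z) by rewrite /h; lia.
have ek : - m - 1 = (h.-1)%:Z by rewrite /h; lia.
have c14 : addn (count (fun s => rank s <= m + 1) (plist n))
            (count (fun s => m + 2 <= rank s) (plist n)) = size (plist n).
  rewrite -(count_predT (plist n)); apply: count_add_helper => s /=.
  case: (lerP (rank s) (m + 1)) => H1.
    by have -> : (m + 2 <= rank s) = false by apply/negbTE; rewrite -ltNge; lia.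
  by have -> : (m + 2 <= rank s) = true by lia.
have c35 := count_predC (in_rank_set (- m - 1)) (plist n).
have c52 : count (predC (in_rank_set (- m - 1))) (plist n) =
           count (fun s => crank s <= m) (plist n).
  rewrite ek em; transitivity (count (crank_le h) (plist n)); last first.
    by apply: eq_count => s /=; rewrite crank_leE.
  rewrite core_nat //; apply: eq_count => s /=; by rewrite rsE.
rewrite -c52.
set a := count (fun s => rank s <= m + 1) (plist n) in c14 *.
set b := count (fun s => m + 2 <= rank s) (plist n) in c14 *.
set c := count (in_rank_set (- m - 1)) (plist n) in c35 *.
set d := count (predC (in_rank_set (- m - 1))) (plist n) in c35 *.
clearbody a b c d; lia.
Qed.
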